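(* Let $B\subseteq X$ be a ranked set whose rank $\rho(B)$ is the maximum rank $k=\max\{\rho(x)\mid x\in X\}$ of $\Sigma$. Then $B^{\nearrow\nearrow}=\{C\}$ where $C=\{x\in X \mid \rho(x)\leq \rho(B),\ x\not\in B\}$.
   Context: Let $(X,\Sigma)$ be a ranked unit implicational base (implications $A\rightarrow b$ with $b\in X$, $A\subseteq X$) with rank function $\rho:X\rightarrow\mathbb{N}$, meaning that whenever $A\rightarrow b\in\Sigma$ and $a\in A$ then $\rho(a)=\rho(b)+1$; in particular $\Sigma$ is acyclic. Without loss of generality $\Sigma$ is the critical base (the unique irredundant implicational base of minimal generators) of the associated convex geometry. Let $\phi$ be its closure operator and $\C_\Sigma$ its family of closed sets. For $B\subseteq X$, define $B^{\nearrow\nearrow}=\max_\subseteq\{C\in\C_\Sigma \mid C\cap B=\emptyset\}$, the inclusion-maximal closed sets disjoint from $B$. A set $B\subseteq X$ is ranked if all its elements have the same rank, denoted $\rho(B)$. *)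

(* Defs.v *)
From mathcomp Require Import all_boot.
Set Implicit Arguments. Unset Strict Implicit. Unset Printing Implicit Defensive.

(* A unit implication A -> b over the finite ground set T. *)
Definition implication (T : finType) := ({set T} * T)%type.

Definition closedb (T : finType) (Sigma : {set implication T}) (C : {set T}) : bool :=
  [forall i in Sigma, (i.1 \subset C) ==> (i.2 \in C)].

Definition closed_sets (T : finType) (Sigma : {set implication T}) : {set {set T}} :=
  [set C | closedb Sigma C].

Definition phi (T : finType) (Sigma : {set implication T}) (Y : {set T}) : {set T} :=
  \bigcap_(C in closed_sets Sigma | Y \subset C) C.

Definition is_rank (T : finType) (Sigma : {set implication T}) (rho : T -> nat) : Prop :=
  forall A b, (A, b) \in Sigma -> forall a, a \in A -> rho a = (rho b).+1.

Definition convex_geometry (T : finType) (Sigma : {set implication T}) : Prop :=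
  phi Sigma set0 = set0 /\
  forall (Y : {set T}) (x y : T), x != y -> x \notin phi Sigma Y -> y \notin phi Sigma Y ->
    x \in phi Sigma (y |: Y) -> y \notin phi Sigma (x |: Y).

(* B^{↗↗}: inclusion-maximal closed sets disjoint from B. *)
Definition maxdisj (T : finType) (Sigma : {set implication T}) (B : {set T}) : {set {set T}} :=
  [set C | maxset (fun C : {set T} => (C \in closed_sets Sigma) && [disjoint C & B]) C].

Definition max_rank (T : finType) (rho : T -> nat) : nat := \max_(x : T) rho x.

(* Main.v *)
Require Import Defs.
From mathcomp Require Import all_boot.

Theorem proposition7 (T : finType) (Sigma : {set implication T}) (rho : T -> nat)
  (hrank : is_rank Sigma rho) (hcg : convex_geometry Sigma)
  (B : {set T}) (hB : forall x, x \in B -> rho x = max_rank rho) :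
  maxdisj Sigma B = [set [set x | (rho x <= max_rank rho) && (x \notin B)]].
Proof.
have EC : [set x | (rho x <= max_rank rho) && (x \notin B)] = ~: B.
  by apply/setP => x; rewrite !inE leq_bigmax.
rewrite EC.
have Hcl : closedb Sigma (~: B).
  apply/forallP => -[A b]; apply/implyP => Hi; apply/implyP => /= HA.
  rewrite inE; apply/negP => Hb.
  case: (set_0Vmem A) => [A0|[a Ha]].
  - subst A.
    have : b \in phi Sigma set0.
      apply/bigcapP => C; rewrite inE => /andP [/forallP /(_ (set0, b)) H _].
      by move: H; rewrite Hi sub0set.
    by case: hcg => -> _; rewrite inE.
  - have := hrank _ _ Hi _ Ha; rewrite (hB _ Hb) => E.
    have := @leq_bigmax _ rho a; rewrite -/(max_rank rho) E.
    by rewrite ltnn.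
apply/setP => D; rewrite !inE; apply/maxsetP/eqP.
- move=> [/andP [_ HD] Hmax]; apply/esym; apply: Hmax.
    by rewrite inE Hcl /= disjoints_subset subxx.
  by rewrite -disjoints_subset.
- move=> ->; split; first by rewrite inE Hcl disjoints_subset subxx.
  move=> E /andP [_ HE] Hs; apply/eqP; rewrite eqEsubset Hs andbT.
  by rewrite -disjoints_subset.
Qed.
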